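(* Let $x_s<x_t$ be integers, let $C\ge 0$, and let $f:[x_s,x_t]\to\mathbb{R}$ be such that $([x_s,x_t],f)$ is an Ameso($C$) pair. Suppose there exist $x^0\in[x_s,x_t]$ and a positive integer $b$ with $[x^0-b,x^0]\subseteq[x_s,x_t]$ such that $f(x^0)=\min_{y\in[x^0-b,x^0]}f(y)$ and $f(x^0)+C\le\max_{y\in[x^0-b,x^0]}f(y)$. Then $f(x^0)=\min_{y\in[x_s,x^0]}f(y)$.
   Context: For integers $a\le b$, $[a,b]$ denotes the set of integers $\{a,a+1,\dots,b\}$. Floors and ceilings of vectors are taken componentwise. A set $D^n\subseteq\mathbb{Z}^n$ is an Ameso set if $\lceil(\vec x+\vec y)/2\rceil,\lfloor(\vec x+\vec y)/2\rfloor\in D^n$ for all $\vec x,\vec y\in D^n$. For $C\ge 0$, $(D^n,f)$ is an Ameso($C$) pair if $D^n$ is an Ameso set, $f:D^n\to\mathbb{R}$ is bounded below, and $f(\vec x)+f(\vec y)+C\ge f(\lceil(\vec x+\vec y)/2\rceil)+f(\lfloor(\vec x+\vec y)/2\rfloor)$ for all $\vec x,\vec y\in D^n$. *)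

(* Defs.v *)
From mathcomp Require Import all_boot all_order all_algebra.
Set Implicit Arguments. Unset Strict Implicit. Unset Printing Implicit Defensive.
Import Order.TTheory GRing.Theory Num.Theory.
Local Open Scope ring_scope.

(* floor(z/2) and ceil(z/2) for an integer z; divz is floor division for d = 2. *)
Definition half_floor (z : int) : int := (z %/ 2)%Z.
Definition half_ceil (z : int) : int := - ((- z) %/ 2)%Z.

(* Ameso sets in dimension n = 1, subsets of Z given as predicates. *)
Definition ameso_set (D : pred int) : Prop :=
  forall x y, D x -> D y -> D (half_ceil (x + y)) /\ D (half_floor (x + y)).

(* Ameso(C) pair (D, f); f is a total function on int, only its values on D matter. *)
Definition ameso_pair (R : realFieldType) (C : R) (D : pred int) (f : int -> R) : Prop :=
  [/\ ameso_set D,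
      (exists m : R, forall x, D x -> m <= f x) &
      (forall x y, D x -> D y ->
         f (half_ceil (x + y)) + f (half_floor (x + y)) <= f x + f y + C)].

Definition Zitv (a b : int) : pred int := fun x => (a <= x) && (x <= b).

(* Main.v *)
Require Import Defs.
From mathcomp Require Import all_boot all_order all_algebra.
From mathcomp Require Import zify ring lra.
Import Order.TTheory GRing.Theory Num.Theory.
Local Open Scope ring_scope.

Lemma half_facts (z : int) : exists r r',
  [/\ half_floor z * 2 + r = z, 0 <= r < 2, half_ceil z * 2 - r' = z & 0 <= r' < 2].
Proof.
exists (z %% 2)%Z, ((- z) %% 2)%Z.
have e1 := divz_eq z 2. have e2 := divz_eq (- z) 2.
rewrite /half_floor /half_ceil.
split.
- by rewrite [X in _ = X]e1.
- by rewrite modz_ge0 //= ltz_pmod.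
- lia.
- by rewrite modz_ge0 //= ltz_pmod.
Qed.

Lemma argmax_itv (R : realFieldType) (f : int -> R) (n : nat) (a : int) :
  exists2 w, a <= w <= a + n%:Z & forall z, a <= z <= a + n%:Z -> f z <= f w.
Proof.
elim: n => [|n [w hw hmax]].
  exists a; first lia.
  by move=> z hz; have -> : z = a by lia.
case: (leP (f w) (f (a + n.+1%:Z))) => h.
  exists (a + n.+1%:Z); first lia.
  move=> z hz; have [hz1|hz1] : z <= a + n%:Z \/ z = a + n.+1%:Z by lia.
    by apply: le_trans h; apply: hmax; lia.
  by rewrite hz1.
exists w; first lia.
move=> z hz; have [hz1|hz1] : z <= a + n%:Z \/ z = a + n.+1%:Z by lia.
  by apply: hmax; lia.
by rewrite hz1; apply: ltW.
Qed.

Section S.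
Variables (R : realFieldType) (xs xt : int) (C : R) (f : int -> R).
Hypothesis H : forall x y, xs <= x <= xt -> xs <= y <= xt ->
  f (half_ceil (x + y)) + f (half_floor (x + y)) <= f x + f y + C.

Lemma Hmid x y w : xs <= x <= xt -> xs <= y <= xt -> x + y = w * 2 ->
  f w + f w <= f x + f y + C.
Proof.
move=> hx hy e; have [r [r' [h1 h2 h3 h4]]] := half_facts (x + y).
have E1 : half_ceil (x + y) = w by lia.
have E2 : half_floor (x + y) = w by lia.
by have := H _ _ hx hy; rewrite E1 E2.
Qed.

Lemma step (x0 y : int) : xs <= y -> y + 2 <= x0 -> x0 <= xt ->
  (forall z, y + 1 <= z <= x0 -> f x0 <= f z) ->
  (exists2 w, y + 1 <= w <= x0 & f x0 + C <= f w) ->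
  f x0 <= f y.
Proof.
move=> hy hyx hx0 hwin [w0 hw0 hC].
have [n hn] : exists n : nat, x0 = y + 1 + n%:Z.
  by exists (absz (x0 - y - 1)%R); rewrite gez0_abs; lia.
have [w hw hmax] := @argmax_itv _ f n (y + 1).
rewrite -hn in hw hmax.
have hfw : f x0 + C <= f w by apply: le_trans hC _; apply: hmax.
have [k hk] : exists k : nat, w - y = k%:Z by exists (absz (w - y)%R); rewrite gez0_abs; lia.
elim: k {-2}k (leqnn k) w hw hmax hfw hk => [|k IH] k' hk' w hw hmax hfw hk.
  have : k' = 0%N by lia. move=> ?; subst; lia.
have [hl|hr] : 2 * w - y <= x0 \/ x0 < 2 * w - y by lia.
  have := @Hmid y (2 * w - y) w; rewrite /=.
  move=> /(_ _ _ _) h; have := h ltac:(lia) ltac:(lia) ltac:(lia).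
  have := hmax (2 * w - y) ltac:(lia).
  lra.
have [ew|nw] : w = x0 \/ w < x0 by lia.
  subst w.
  have [r [r' [h1 h2 h3 h4]]] := half_facts (y + x0).
  have := H y x0 ltac:(lia) ltac:(lia).
  have := hwin (half_ceil (y + x0)) ltac:(lia).
  have := hwin (half_floor (y + x0)) ltac:(lia).
  lra.
pose p := 2 * w - x0.
have hp := @Hmid p x0 w ltac:(lia) ltac:(lia) ltac:(lia).
have hfp : f w <= f p by lra.
apply: (IH ((absz (p - y)%R)) _ p).
- lia.
- lia.
- by move=> z hz; apply: le_trans hfp; apply: hmax.
- lra.
- lia.
Qed.
End S.

Theorem lemma5 (R : realFieldType) (xs xt : int) (C : R) (f : int -> R)
  (x0 b : int) :
  xs < xt -> 0 <= C ->
  ameso_pair C (Zitv xs xt) f ->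
  0 < b -> xs <= x0 - b -> x0 <= xt ->
  (* f(x0) = min over [x0-b, x0] *)
  (forall y, Zitv (x0 - b) x0 y -> f x0 <= f y) ->
  (* f(x0) + C <= max over [x0-b, x0] *)
  (exists2 y, Zitv (x0 - b) x0 y & f x0 + C <= f y) ->
  forall y, Zitv xs x0 y -> f x0 <= f y.
Proof.
move=> _ hC [_ _ hA] hb hxs hxt hmin [w hw hfw] y.
rewrite /Zitv in hmin hw * => hy.
have H : forall x y, xs <= x <= xt -> xs <= y <= xt ->
  f (half_ceil (x + y)) + f (half_floor (x + y)) <= f x + f y + C.
  by move=> u v hu hv; apply: hA.
have [K hK] : exists K : nat, x0 - b - xs = K%:Z.
  by exists (absz (x0 - b - xs)%R); rewrite gez0_abs; lia.
suff main : forall k : nat, forall z, x0 - b - k%:Z <= z <= x0 -> xs <= z -> f x0 <= f z.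
  apply: (main K); lia.
elim=> [|k IH] z hz hzs.
  by apply: hmin; lia.
have [h|h] : x0 - b - k%:Z <= z \/ z = x0 - b - k%:Z - 1 by lia.
  by apply: IH; lia.
apply: (@step R xs xt C f H x0 z); [lia|lia|lia| |].
  by move=> u hu; apply: IH; lia.
by exists w; [lia|].
Qed.
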